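(* Let $f:\mathbb{R}^p\to\mathbb{R}$ be convex and twice continuously differentiable (not necessarily strictly convex), with the setting below. Let $I\subset(0,\infty)$ be an open interval such that for every $\rho\in I$ the function $\mathcal{E}_\rho$ has a unique minimizer $\mathbf{x}(\rho)$, the map $\rho\mapsto\mathbf{x}(\rho)$ is continuous on $I$, the index sets computed at $\mathbf{x}(\rho)$ do not depend on $\rho\in I$, and the rows of $\mathbf{U}_{\mathcal{Z}}$ are linearly independent. Let $\mathbf{Y}\in\mathbb{R}^{p\times(p-|\mathcal{Z}|)}$ be a matrix whose columns form a basis of the null space $\{\mathbf{y}:\mathbf{U}_{\mathcal{Z}}\mathbf{y}=\mathbf{0}\}$, where $|\mathcal{Z}|=|\mathcal{Z}_E|+|\mathcal{Z}_I|$, and assume $\mathbf{Y}^t d^2f(\mathbf{x}(\rho))\mathbf{Y}$ is nonsingular for every $\rho\in I$. Then $\rho\mapsto\mathbf{x}(\rho)$ is differentiable on $I$ and $$\frac{d\mathbf{x}(\rho)}{d\rho}=-\mathbf{Y}\,[\mathbf{Y}^t\mathbf{H}(\mathbf{x}(\rho))\mathbf{Y}]^{-1}\mathbf{Y}^t\mathbf{u}_{\bar{\mathcal{Z}}},$$ where $\mathbf{H}(\mathbf{x})=d^2f(\mathbf{x})$.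
   Context: Setting: $g_i(\mathbf{x})=\mathbf{v}_i^t\mathbf{x}-d_i$ ($1\le i\le r$), $h_j(\mathbf{x})=\mathbf{w}_j^t\mathbf{x}-e_j$ ($1\le j\le s$); $\mathcal{E}_\rho(\mathbf{x})=f(\mathbf{x})+\rho\sum_i|g_i(\mathbf{x})|+\rho\sum_j\max\{0,h_j(\mathbf{x})\}$. Index sets at $\mathbf{x}$: $\mathcal{N}_E=\{i:g_i(\mathbf{x})<0\}$, $\mathcal{Z}_E=\{i:g_i(\mathbf{x})=0\}$, $\mathcal{P}_E=\{i:g_i(\mathbf{x})>0\}$, $\mathcal{N}_I=\{j:h_j(\mathbf{x})<0\}$, $\mathcal{Z}_I=\{j:h_j(\mathbf{x})=0\}$, $\mathcal{P}_I=\{j:h_j(\mathbf{x})>0\}$. $\mathbf{U}_{\mathcal{Z}}$ is the matrix with rows $\mathbf{v}_i^t$ ($i\in\mathcal{Z}_E$) and $\mathbf{w}_j^t$ ($j\in\mathcal{Z}_I$); $\mathbf{u}_{\bar{\mathcal{Z}}}=-\sum_{i\in\mathcal{N}_E}\mathbf{v}_i+\sum_{i\in\mathcal{P}_E}\mathbf{v}_i+\sum_{j\in\mathcal{P}_I}\mathbf{w}_j$. *)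

(* Defs.v *)
From Stdlib Require Import Reals Lra.
From Stdlib Require Fin.
Open Scope R_scope.

Definition vec (n : nat) := Fin.t n -> R.

Fixpoint fsum (n : nat) : (Fin.t n -> R) -> R :=
  match n return (Fin.t n -> R) -> R with
  | O => fun _ => 0
  | S m => fun F => F Fin.F1 + fsum m (fun i => F (Fin.FS i))
  end.

Definition dot {n : nat} (u v : vec n) : R := fsum n (fun i => u i * v i).
Definition vnorm {n : nat} (u : vec n) : R := sqrt (dot u u).
Definition vadd {n : nat} (u v : vec n) : vec n := fun i => u i + v i.
Definition vsub {n : nat} (u v : vec n) : vec n := fun i => u i - v i.
Definition vscale {n : nat} (a : R) (u : vec n) : vec n := fun i => a * u i.

Definition convex {n : nat} (f : vec n -> R) : Prop :=
  forall (x y : vec n) (t : R), 0 <= t <= 1 ->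
    f (vadd (vscale t x) (vscale (1 - t) y)) <= t * f x + (1 - t) * f y.

Definition frechet_grad {n : nat} (F : vec n -> R) (g : vec n) (x : vec n) : Prop :=
  forall eps, 0 < eps -> exists delta, 0 < delta /\
    forall h : vec n, vnorm h < delta ->
      Rabs (F (vadd x h) - F x - dot g h) <= eps * vnorm h.

(* f is twice continuously differentiable on R^n, with gradient [grad] and
   Hessian [hess] : hess x i j = d/dx_j (d f / dx_i) (x). *)
Definition C2_with {n : nat} (f : vec n -> R) (grad : vec n -> vec n)
    (hess : vec n -> Fin.t n -> vec n) : Prop :=
  (forall x, frechet_grad f (grad x) x) /\
  (forall x i, frechet_grad (fun y => grad y i) (hess x i) x) /\
  (forall x i j eps, 0 < eps -> exists delta, 0 < delta /\
     forall y, vnorm (vsub y x) < delta -> Rabs (hess y i j - hess x i j) < eps).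

Definition is_open_interval (I : R -> Prop) : Prop :=
  (forall a b c, I a -> I c -> a <= b <= c -> I b) /\
  (forall a, I a -> exists delta, 0 < delta /\
     forall b, Rabs (b - a) < delta -> I b).

Definition gfun {p r : nat} (v : Fin.t r -> vec p) (d : vec r) (i : Fin.t r)
  (x : vec p) : R := dot (v i) x - d i.
Definition hfun {p s : nat} (w : Fin.t s -> vec p) (e : vec s) (j : Fin.t s)
  (x : vec p) : R := dot (w j) x - e j.

Definition Epen {p r s : nat} (f : vec p -> R) (v : Fin.t r -> vec p) (d : vec r)
  (w : Fin.t s -> vec p) (e : vec s) (rho : R) (x : vec p) : R :=
  f x + rho * fsum r (fun i => Rabs (gfun v d i x))
      + rho * fsum s (fun j => Rmax 0 (hfun w e j x)).

Definition is_minimizer {p : nat} (F : vec p -> R) (x : vec p) : Prop :=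
  forall y, F x <= F y.

Definition unique_minimizer {p : nat} (F : vec p -> R) (x : vec p) : Prop :=
  is_minimizer F x /\ forall y, is_minimizer F y -> forall l, y l = x l.

(* u_{bar Z}(x) = - sum_{N_E} v_i + sum_{P_E} v_i + sum_{P_I} w_j *)
Definition sgnE (a : R) : R :=
  if Rlt_dec a 0 then -1 else if Rlt_dec 0 a then 1 else 0.
Definition posI (a : R) : R := if Rlt_dec 0 a then 1 else 0.

Definition uZbar {p r s : nat} (v : Fin.t r -> vec p) (d : vec r)
  (w : Fin.t s -> vec p) (e : vec s) (x : vec p) : vec p :=
  fun l => fsum r (fun i => sgnE (gfun v d i x) * v i l)
         + fsum s (fun j => posI (hfun w e j x) * w j l).

Definition same_index_sets {p r s : nat} (v : Fin.t r -> vec p) (d : vec r)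
  (w : Fin.t s -> vec p) (e : vec s) (x y : vec p) : Prop :=
  (forall i, (gfun v d i x < 0 <-> gfun v d i y < 0) /\
             (gfun v d i x = 0 <-> gfun v d i y = 0) /\
             (0 < gfun v d i x <-> 0 < gfun v d i y)) /\
  (forall j, (hfun w e j x < 0 <-> hfun w e j y < 0) /\
             (hfun w e j x = 0 <-> hfun w e j y = 0) /\
             (0 < hfun w e j x <-> 0 < hfun w e j y)).

(* The rows of U_Z (v_i, i in Z_E, and w_j, j in Z_I, at x) are linearly independent *)
Definition UZ_rows_indep {p r s : nat} (v : Fin.t r -> vec p) (d : vec r)
  (w : Fin.t s -> vec p) (e : vec s) (x : vec p) : Prop :=
  forall (a : vec r) (b : vec s),
    (forall i, gfun v d i x <> 0 -> a i = 0) ->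
    (forall j, hfun w e j x <> 0 -> b j = 0) ->
    (forall l, fsum r (fun i => a i * v i l) + fsum s (fun j => b j * w j l) = 0) ->
    (forall i, a i = 0) /\ (forall j, b j = 0).

Definition in_null_UZ {p r s : nat} (v : Fin.t r -> vec p) (d : vec r)
  (w : Fin.t s -> vec p) (e : vec s) (x : vec p) (y : vec p) : Prop :=
  (forall i, gfun v d i x = 0 -> dot (v i) y = 0) /\
  (forall j, hfun w e j x = 0 -> dot (w j) y = 0).

(* Matrix Y (p x k) given by its columns Y c; product Y a *)
Definition mat_col_comb {p k : nat} (Y : Fin.t k -> vec p) (a : vec k) : vec p :=
  fun l => fsum k (fun c => a c * Y c l).

Definition null_basis {p r s k : nat} (v : Fin.t r -> vec p) (d : vec r)
  (w : Fin.t s -> vec p) (e : vec s) (x : vec p) (Y : Fin.t k -> vec p) : Prop :=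
  (forall c, in_null_UZ v d w e x (Y c)) /\
  (forall a : vec k, (forall l, mat_col_comb Y a l = 0) -> forall c, a c = 0) /\
  (forall y, in_null_UZ v d w e x y ->
     exists a : vec k, forall l, y l = mat_col_comb Y a l).

Definition reduced_hess {p k : nat} (H : Fin.t p -> vec p) (Y : Fin.t k -> vec p)
  : Fin.t k -> vec k :=
  fun c c' => fsum p (fun l => Y c l * fsum p (fun m => H l m * Y c' m)).

Definition mat_vec {k : nat} (M : Fin.t k -> vec k) (z : vec k) : vec k :=
  fun c => fsum k (fun c' => M c c' * z c').

Definition nonsingular {k : nat} (M : Fin.t k -> vec k) : Prop :=
  forall z : vec k, (forall c, mat_vec M z c = 0) -> forall c, z c = 0.

Definition mat_tr_vec {p k : nat} (Y : Fin.t k -> vec p) (u : vec p) : vec k :=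
  fun c => dot (Y c) u.

(* Main.v *)
Require Import Defs.
From Stdlib Require Import Reals.
Open Scope R_scope.
From Stdlib Require Import Lra FunctionalExtensionality.
From Stdlib Require Fin.
From mathcomp Require Import all_boot all_algebra Rstruct.

Module InvMx.
Import GRing.Theory.
Local Open Scope ring_scope.

Definition o2f {n} (i : 'I_n) : Fin.t n := Fin.of_nat_lt (elimT ltP (ltn_ord i)).
Definition f2o {n} (c : Fin.t n) : 'I_n :=
  Ordinal (introT ltP (proj2_sig (Fin.to_nat c))).

Lemma o2f_f2o n (c : Fin.t n) : o2f (f2o c) = c.
Proof.
rewrite /o2f /f2o /=.
transitivity (Fin.of_nat_lt (proj2_sig (Fin.to_nat c))).
  apply: Fin.of_nat_ext. apply: Fin.of_nat_to_nat_inv.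
Qed.

Lemma f2o_o2f n (i : 'I_n) : f2o (o2f i) = i.
Proof.
apply: val_inj => /=. rewrite /o2f Fin.to_nat_of_nat //.
Qed.

Lemma fsum_big n (F : Fin.t n -> R) : fsum n F = \sum_(i < n) F (o2f i).
Proof.
elim: n F => [|n IH] F; first by rewrite big_ord0.
rewrite big_ord_recl /=. 
have -> : o2f (@ord0 n) = Fin.F1 by [].
rewrite IH. congr (_ + _). apply: eq_bigr => i _.
congr F. rewrite /o2f /=. congr Fin.FS. apply: Fin.of_nat_ext.
Qed.

Definition colv {n} (z : vec n) : 'cV[R]_n := \col_i z (o2f i).

Lemma mulcol n (X : 'M[R]_n) (z : vec n) c :
  fsum n (fun c' => X (f2o c) (f2o c') * z c') = (X *m colv z) (f2o c) 0.
Proof.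
rewrite fsum_big !mxE. apply: eq_bigr => i _. by rewrite f2o_o2f mxE.
Qed.

Lemma fsum_ext n (F G : Fin.t n -> R) : (forall i, F i = G i) -> fsum n F = fsum n G.
Proof. elim: n F G => [|n IH] F G H /=; first by []. rewrite H. congr (_ + _). by apply: IH. Qed.

Lemma mat_inv k (M : Fin.t k -> vec k) : nonsingular M ->
  exists N : Fin.t k -> vec k,
    (forall b c, mat_vec M (mat_vec N b) c = b c) /\
    (forall z c, mat_vec N (mat_vec M z) c = z c).
Proof.
move=> Hns.
set MM : 'M[R]_k := \matrix_(i, j) M (o2f i) (o2f j).
have HM : forall z c, mat_vec M z c = (MM *m colv z) (f2o c) 0.
  move=> z c. rewrite -mulcol /mat_vec. apply: fsum_ext => c' /=.
  by rewrite mxE !o2f_f2o.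
have Hu : MM \in unitmx.
  rewrite unitmxE unitfE -det_tr. apply/negP => /det0P [v vn0 Hv].
  pose z : vec k := fun c => v 0 (f2o c).
  have Hcz : colv z = v^T.
    apply/matrixP => i j. by rewrite !mxE /z f2o_o2f (ord1 j).
  have Hz : forall c, mat_vec M z c = 0.
    move=> c. rewrite HM Hcz -[MM]trmxK -trmx_mul Hv !mxE //.
  have Hz0 := Hns z Hz.
  apply/negP: vn0. rewrite negbK. apply/eqP/matrixP => i j.
  rewrite (ord1 i) mxE. have := Hz0 (o2f j). by rewrite /z f2o_o2f.
set NN := invmx MM.
exists (fun c c' => NN (f2o c) (f2o c')).
have HN : forall b, colv (mat_vec (fun c c' => NN (f2o c) (f2o c')) b) = NN *m colv b.
  move=> b. apply/matrixP => i j. rewrite (ord1 j) !mxE /mat_vec mulcol f2o_o2f !mxE //.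
split.
- move=> b c. rewrite HM HN mulmxA mulmxV // mul1mx mxE o2f_f2o //.
- move=> z c. rewrite /mat_vec mulcol.
  have -> : colv (fun c' => fsum k (fun c'0 => M c' c'0 * z c'0)) = MM *m colv z.
    apply/matrixP => i j. rewrite (ord1 j) mxE. rewrite -[X in X = _]/(mat_vec M z (o2f i)).
    by rewrite HM f2o_o2f.
  by rewrite mulmxA mulVmx // mul1mx mxE o2f_f2o.
Qed.
End InvMx.

Open Scope R_scope.

Lemma fsum_ext' n (F G : Fin.t n -> R) : (forall i, F i = G i) -> fsum n F = fsum n G.
Proof. induction n; simpl; intros; [reflexivity|]. rewrite H (IHn _ _ (fun i => H (Fin.FS i))). reflexivity. Qed.

Lemma fsum_plus n (F G : Fin.t n -> R) : fsum n (fun i => F i + G i) = fsum n F + fsum n G.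
Proof. induction n; simpl; [lra|]. rewrite IHn. lra. Qed.

Lemma fsum_scal n c (F : Fin.t n -> R) : fsum n (fun i => c * F i) = c * fsum n F.
Proof. induction n; simpl; [lra|]. rewrite IHn. lra. Qed.

Lemma fsum_const n c : fsum n (fun _ => c) = INR n * c.
Proof. induction n; simpl fsum; [simpl; lra|]. rewrite IHn S_INR. lra. Qed.

Lemma fsum_zero n (F : Fin.t n -> R) : (forall i, F i = 0) -> fsum n F = 0.
Proof. intros H. rewrite (fsum_ext' _ _ (fun _ => 0)) // fsum_const. lra. Qed.

Lemma fsum_minus n (F G : Fin.t n -> R) : fsum n (fun i => F i - G i) = fsum n F - fsum n G.
Proof. induction n; simpl; [lra|]. rewrite IHn. lra. Qed.

Lemma fsum_swap n m (F : Fin.t n -> Fin.t m -> R) :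
  fsum n (fun i => fsum m (fun j => F i j)) = fsum m (fun j => fsum n (fun i => F i j)).
Proof.
induction n; simpl.
- rewrite fsum_zero //.
- rewrite IHn -fsum_plus. reflexivity.
Qed.

Lemma fsum_le n (F G : Fin.t n -> R) : (forall i, F i <= G i) -> fsum n F <= fsum n G.
Proof. induction n; simpl; intros H; [lra|]. specialize (IHn (fun i => F (Fin.FS i)) (fun i => G (Fin.FS i)) (fun i => H (Fin.FS i))). specialize (H Fin.F1). lra. Qed.

Lemma fsum_abs n (F : Fin.t n -> R) : Rabs (fsum n F) <= fsum n (fun i => Rabs (F i)).
Proof. induction n; simpl. rewrite Rabs_R0; lra.
eapply Rle_trans; [apply Rabs_triang|]. specialize (IHn (fun i => F (Fin.FS i))). lra. Qed.

Lemma fsum_nonneg n (F : Fin.t n -> R) : (forall i, 0 <= F i) -> 0 <= fsum n F.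
Proof. intros H. rewrite -(fsum_zero n (fun _ => 0)) //. by apply fsum_le. Qed.

Lemma fsum_term n (F : Fin.t n -> R) i : (forall i, 0 <= F i) -> F i <= fsum n F.
Proof.
induction n; intros H. inversion i.
apply (Fin.caseS' i); simpl.
- have := fsum_nonneg _ (fun j => F (Fin.FS j)) (fun j => H (Fin.FS j)). lra.
- intros q. have := IHn (fun j => F (Fin.FS j)) q (fun j => H (Fin.FS j)). have := H Fin.F1. lra.
Qed.

Lemma fsum_sq n (F : Fin.t n -> R) : fsum n (fun i => F i * F i) <= (fsum n (fun i => Rabs (F i)))^2.
Proof.
induction n; simpl. lra.
have := IHn (fun i => F (Fin.FS i)).
have := fsum_nonneg _ (fun i => Rabs (F (Fin.FS i))) (fun i => Rabs_pos _).
have := Rabs_pos (F Fin.F1). have: F Fin.F1 * F Fin.F1 = Rabs (F Fin.F1) * Rabs (F Fin.F1).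
  rewrite -Rabs_mult Rabs_right //. apply Rle_ge, Rle_0_sqr.
nra.
Qed.

Definition n1 {n} (z : vec n) := fsum n (fun i => Rabs (z i)).

Lemma n1_pos n (z : vec n) : 0 <= n1 z.
Proof. apply fsum_nonneg => i. apply Rabs_pos. Qed.

Lemma n1_coord n (z : vec n) i : Rabs (z i) <= n1 z.
Proof. apply (fsum_term _ (fun i => Rabs (z i))) => j. apply Rabs_pos. Qed.

Lemma dot_pos n (z : vec n) : 0 <= dot z z.
Proof. apply fsum_nonneg => i. apply Rle_0_sqr. Qed.

Lemma vnorm_n1 n (z : vec n) : vnorm z <= n1 z.
Proof.
unfold vnorm. rewrite -(sqrt_pow2 (n1 z)); [|apply n1_pos].
apply sqrt_le_1_alt. apply fsum_sq.
Qed.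

Lemma vnorm_scale n t (y : vec n) : vnorm (vscale t y) = Rabs t * vnorm y.
Proof.
unfold vnorm, dot, vscale.
rewrite (fsum_ext' _ _ (fun i => (t*t) * (y i * y i))); [|intros; ring].
rewrite fsum_scal sqrt_mult; [|apply Rle_0_sqr|apply dot_pos].
change (t*t) with (Rsqr t). rewrite sqrt_Rsqr_abs. reflexivity.
Qed.

Lemma lin_bound n (A q : vec n) : Rabs (fsum n (fun j => A j * q j)) <= n1 A * n1 q.
Proof.
eapply Rle_trans; [apply fsum_abs|].
apply Rle_trans with (fsum n (fun j => n1 q * Rabs (A j))).
- apply fsum_le => j. rewrite Rabs_mult.
  have := n1_coord _ q j. have := Rabs_pos (A j). nra.
- rewrite fsum_scal /n1. lra.
Qed.

Lemma fin_delta (A : Type) (m : A -> R) n (Q : Fin.t n -> A -> Prop) :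
  (forall i, exists δ, 0 < δ /\ forall a, m a < δ -> Q i a) ->
  exists δ, 0 < δ /\ forall a, m a < δ -> forall i, Q i a.
Proof.
induction n; intros H.
- exists 1. split; [lra|]. intros a _ i. inversion i.
- destruct (IHn (fun i => Q (Fin.FS i)) (fun i => H (Fin.FS i))) as [d1 [Hd1 H1]].
  destruct (H Fin.F1) as [d0 [Hd0 H0]].
  exists (Rmin d0 d1). split. apply Rmin_pos; lra.
  intros a Ha i. apply (Fin.caseS' i).
  + apply H0. eapply Rlt_le_trans; [exact Ha|apply Rmin_l].
  + intros q. apply (H1 a). eapply Rlt_le_trans; [exact Ha|apply Rmin_r].
Qed.

Lemma dot_add_r n (u a b : vec n) : dot u (vadd a b) = dot u a + dot u b.
Proof. unfold dot, vadd. rewrite -fsum_plus. apply fsum_ext' => i. ring. Qed.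
Lemma dot_scale_r n (u a : vec n) t : dot u (vscale t a) = t * dot u a.
Proof. unfold dot, vscale. rewrite -fsum_scal. apply fsum_ext' => i. ring. Qed.
Lemma dot_sub_r n (u a b : vec n) : dot u (vsub a b) = dot u a - dot u b.
Proof. unfold dot, vsub. rewrite -fsum_minus. apply fsum_ext' => i. ring. Qed.
Lemma dot_comm n (a b : vec n) : dot a b = dot b a.
Proof. unfold dot. apply fsum_ext' => i. ring. Qed.

Lemma sign_pert (g a : R) : (g = 0 -> a = 0) ->
  exists δ, 0 < δ /\ forall t, Rabs t < δ ->
    Rabs (g + t * a) = Rabs g + t * (sgnE g * a) /\
    Rmax 0 (g + t * a) = Rmax 0 g + t * (posI g * a).
Proof.
intros Hga.
have Hapos : 0 < Rabs a + 1 by have := Rabs_pos a; lra.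
destruct (Req_dec g 0) as [Hg|Hg].
- exists 1. split; [lra|]. intros t _. rewrite (Hga Hg) Hg.
  unfold sgnE, posI. destruct (Rlt_dec 0 0); [lra|]. destruct (Rlt_dec 0 0); [lra|].
  replace (0 + t*0) with 0 by ring. split; ring.
- exists (Rabs g / (Rabs a + 1)). split.
  + apply Rdiv_lt_0_compat; [apply Rabs_pos_lt; exact Hg|exact Hapos].
  + intros t Ht.
    have Hb : Rabs t * (Rabs a + 1) < Rabs g.
      apply (Rmult_lt_compat_r (Rabs a + 1)) in Ht; [|exact Hapos].
      unfold Rdiv in Ht. rewrite Rmult_assoc Rinv_l in Ht; lra.
    have Hta : Rabs (t * a) <= Rabs t * Rabs a by rewrite Rabs_mult; lra.
    have := Rabs_pos t. have := Rle_abs (t*a). have := Rle_abs (-(t*a)). rewrite Rabs_Ropp.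
    intros H1 H2 H3.
    unfold sgnE, posI. destruct (Rlt_dec g 0) as [Hl|Hl].
    * have Hn : g + t * a < 0.
        rewrite (Rabs_left g Hl) Rmult_plus_distr_l in Hb. lra.
      destruct (Rlt_dec 0 g); [lra|].
      rewrite (Rabs_left _ Hn) (Rabs_left _ Hl) (Rmax_left 0 (g + t*a)); [|lra].
      rewrite Rmax_left; [|lra]. split; ring.
    * have Hp : 0 < g by lra.
      destruct (Rlt_dec 0 g); [|lra].
      have Hn : 0 < g + t * a.
        rewrite (Rabs_right g) in Hb; [|lra]. rewrite Rmult_plus_distr_l in Hb. lra.
      rewrite (Rabs_right _ (Rle_ge _ _ (Rlt_le _ _ Hn))) (Rabs_right g); [|lra].
      rewrite (Rmax_right 0 (g + t*a)); [|lra]. rewrite Rmax_right; [|lra]. split; ring.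
Qed.

Lemma fsum_scal_r n c (F : Fin.t n -> R) : fsum n F * c = fsum n (fun i => F i * c).
Proof. rewrite Rmult_comm -fsum_scal. apply fsum_ext' => i. ring. Qed.

Lemma dot_uZbar p r s (v : Fin.t r -> vec p) d (w : Fin.t s -> vec p) e xs y :
  dot (uZbar v d w e xs) y =
  fsum r (fun i => sgnE (gfun v d i xs) * dot (v i) y) +
  fsum s (fun j => posI (hfun w e j xs) * dot (w j) y).
Proof.
unfold dot, uZbar.
rewrite (fsum_ext' _ _ (fun l => fsum r (fun i => sgnE (gfun v d i xs) * (v i l * y l))
   + fsum s (fun j => posI (hfun w e j xs) * (w j l * y l)))).
- rewrite fsum_plus (fsum_swap p r) (fsum_swap p s). f_equal; apply fsum_ext' => i; rewrite fsum_scal //.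
- intros l. rewrite Rmult_plus_distr_r !fsum_scal_r. f_equal; apply fsum_ext' => i; ring.
Qed.

Lemma gfun_lin p r (v : Fin.t r -> vec p) d i xs t y :
  gfun v d i (vadd xs (vscale t y)) = gfun v d i xs + t * dot (v i) y.
Proof. unfold gfun. rewrite dot_add_r dot_scale_r. ring. Qed.
Lemma hfun_lin p s (w : Fin.t s -> vec p) e j xs t y :
  hfun w e j (vadd xs (vscale t y)) = hfun w e j xs + t * dot (w j) y.
Proof. unfold hfun. rewrite dot_add_r dot_scale_r. ring. Qed.

Lemma foc p r s (v : Fin.t r -> vec p) d (w : Fin.t s -> vec p) e f grad
  (Hg : forall x, frechet_grad f (grad x) x) rho xs
  (Hm : is_minimizer (Epen f v d w e rho) xs) y (Hy : in_null_UZ v d w e xs y) :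
  dot (grad xs) y + rho * dot (uZbar v d w e xs) y = 0.
Proof.
destruct Hy as [Hyg Hyh].
destruct (fin_delta R Rabs r (fun i t => Rabs (gfun v d i xs + t * dot (v i) y) =
   Rabs (gfun v d i xs) + t * (sgnE (gfun v d i xs) * dot (v i) y))) as [d1 [Hd1 H1]].
{ intros i. destruct (sign_pert (gfun v d i xs) (dot (v i) y) (Hyg i)) as [δ [Hδ H]].
  exists δ. split; [exact Hδ|]. intros t Ht. apply (H t Ht). }
destruct (fin_delta R Rabs s (fun j t => Rmax 0 (hfun w e j xs + t * dot (w j) y) =
   Rmax 0 (hfun w e j xs) + t * (posI (hfun w e j xs) * dot (w j) y))) as [d2 [Hd2 H2]].
{ intros j. destruct (sign_pert (hfun w e j xs) (dot (w j) y) (Hyh j)) as [δ [Hδ H]].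
  exists δ. split; [exact Hδ|]. intros t Ht. apply (H t Ht). }
set U := dot (uZbar v d w e xs) y.
have Hkey : forall t, Rabs t < Rmin d1 d2 ->
  Epen f v d w e rho (vadd xs (vscale t y)) =
  f (vadd xs (vscale t y)) + (Epen f v d w e rho xs - f xs) + rho * t * U.
{ intros t Ht. unfold Epen, U. rewrite dot_uZbar.
  rewrite (fsum_ext' _ (fun i => Rabs (gfun v d i (vadd xs (vscale t y))))
     (fun i => Rabs (gfun v d i xs) + t * (sgnE (gfun v d i xs) * dot (v i) y))).
  2:{ intros i. rewrite gfun_lin. apply H1. eapply Rlt_le_trans; [exact Ht|apply Rmin_l]. }
  rewrite (fsum_ext' _ (fun j => Rmax 0 (hfun w e j (vadd xs (vscale t y))))
     (fun j => Rmax 0 (hfun w e j xs) + t * (posI (hfun w e j xs) * dot (w j) y))).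
  2:{ intros j. rewrite hfun_lin. apply H2. eapply Rlt_le_trans; [exact Ht|apply Rmin_r]. }
  rewrite !fsum_plus !fsum_scal. ring. }
set D := dot (grad xs) y + rho * U.
destruct (Req_dec D 0) as [HD|HD]; [exact HD|exfalso].
set V := vnorm y.
have HV : 0 <= V by apply sqrt_pos.
have HDp : 0 < Rabs D by apply Rabs_pos_lt.
set eps := Rabs D / (2 * (V + 1)).
have Heps : 0 < eps by apply Rdiv_lt_0_compat; lra.
destruct (Hg xs eps Heps) as [dF [HdF HF]].
set mm := Rmin (Rmin d1 d2) (dF / (V + 1)).
have Hmm : 0 < mm.
{ apply Rmin_pos; [apply Rmin_pos; lra|apply Rdiv_lt_0_compat; lra]. }
set tau := mm / 2.
have Htau : 0 < tau by unfold tau; lra.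
have Htau1 : tau < Rmin d1 d2.
{ have := Rmin_l (Rmin d1 d2) (dF / (V + 1)). fold mm. unfold tau. lra. }
have HtauV : tau * V < dF.
{ have : tau < dF / (V + 1). have := Rmin_r (Rmin d1 d2) (dF / (V + 1)). fold mm. unfold tau. lra.
  intros Ht. apply (Rmult_lt_compat_r (V+1)) in Ht; [|lra].
  unfold Rdiv in Ht. rewrite Rmult_assoc Rinv_l in Ht; nra. }
have Hside : forall t, Rabs t = tau -> 0 <= t * D + eps * tau * V.
{ intros t Ht.
  have Hn : vnorm (vscale t y) = tau * V by rewrite vnorm_scale Ht.
  have HF' := HF (vscale t y) ltac:(rewrite Hn; exact HtauV).
  rewrite Hn dot_scale_r in HF'.
  have Hmin := Hm (vadd xs (vscale t y)).
  rewrite (Hkey t) in Hmin; [|rewrite Ht; exact Htau1].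
  have := Rle_abs (f (vadd xs (vscale t y)) - f xs - t * dot (grad xs) y).
  unfold D. nra. }
have Hp := Hside tau ltac:(rewrite Rabs_right; lra).
have Hm' := Hside (- tau) ltac:(rewrite Rabs_Ropp Rabs_right; lra).
have HepsV : eps * V < Rabs D.
{ unfold eps. unfold Rdiv. 
  have : Rabs D * / (2 * (V + 1)) * V * (2 * (V+1)) = Rabs D * V by field; lra.
  intros E. nra. }
have : Rabs D <= eps * V.
{ unfold Rabs. destruct (Rcase_abs D); nra. }
lra.
Qed.

Lemma sgnE_eq a b : (a < 0 <-> b < 0) -> (a = 0 <-> b = 0) -> (0 < a <-> 0 < b) -> sgnE a = sgnE b.
Proof.
intros H1 H2 H3. unfold sgnE.
destruct (Rlt_dec a 0), (Rlt_dec b 0); try reflexivity; try tauto.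
destruct (Rlt_dec 0 a), (Rlt_dec 0 b); try reflexivity; tauto.
Qed.
Lemma posI_eq a b : (0 < a <-> 0 < b) -> posI a = posI b.
Proof. intros H3. unfold posI. destruct (Rlt_dec 0 a), (Rlt_dec 0 b); try reflexivity; tauto. Qed.

Lemma uZbar_eq p r s (v : Fin.t r -> vec p) d (w : Fin.t s -> vec p) e x0 x1 :
  same_index_sets v d w e x0 x1 -> uZbar v d w e x1 = uZbar v d w e x0.
Proof.
intros [Hg Hh]. apply functional_extensionality => l. unfold uZbar. f_equal.
- apply fsum_ext' => i. destruct (Hg i) as [A [B C]]. rewrite (sgnE_eq _ _ A B C). reflexivity.
- apply fsum_ext' => j. destruct (Hh j) as [A [B C]]. rewrite (posI_eq _ _ C). reflexivity.
Qed.

Lemma null_diff p r s (v : Fin.t r -> vec p) d (w : Fin.t s -> vec p) e x0 x1 :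
  same_index_sets v d w e x0 x1 -> in_null_UZ v d w e x0 (vsub x1 x0).
Proof.
intros [Hg Hh]. split.
- intros i Hi. destruct (Hg i) as [_ [B _]]. have := proj1 B Hi. unfold gfun in *.
  rewrite dot_sub_r. lra.
- intros j Hj. destruct (Hh j) as [_ [B _]]. have := proj1 B Hj. unfold hfun in *.
  rewrite dot_sub_r. lra.
Qed.

Lemma opbound m n (A : Fin.t m -> vec n) (q : vec n) :
  n1 (fun i => fsum n (fun j => A i j * q j)) <= fsum m (fun i => n1 (A i)) * n1 q.
Proof.
unfold n1 at 1. rewrite fsum_scal_r. apply fsum_le => i. apply lin_bound.
Qed.

Lemma mat_vec_rh p k (H : Fin.t p -> vec p) (Y : Fin.t k -> vec p) a c :
  mat_vec (reduced_hess H Y) a c = fsum p (fun l => Y c l * dot (H l) (mat_col_comb Y a)).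
Proof.
unfold mat_vec, reduced_hess, dot, mat_col_comb.
rewrite (fsum_ext' _ _ (fun c' => fsum p (fun l => fsum p (fun m => Y c l * H l m * Y c' m * a c')))).
2:{ intros c'. rewrite fsum_scal_r. apply fsum_ext' => l. rewrite -fsum_scal fsum_scal_r.
    apply fsum_ext' => m. ring. }
rewrite fsum_swap. apply fsum_ext' => l. rewrite fsum_swap. rewrite -fsum_scal. apply fsum_ext' => m.
rewrite -fsum_scal -fsum_scal. apply fsum_ext' => c'. ring.
Qed.

Lemma cont_delta (g : R -> R) t0 : continuity_pt g t0 -> forall eps, 0 < eps ->
  exists δ, 0 < δ /\ forall h, Rabs h < δ -> Rabs (g (t0 + h) - g t0) < eps.
Proof.
intros Hc eps He. destruct (Hc eps He) as [α [Hα Hf]]. exists α. split; [exact Hα|].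
intros h Hh. destruct (Req_dec h 0) as [E|E].
- rewrite E Rplus_0_r. replace (g t0 - g t0) with 0 by ring. rewrite Rabs_R0. exact He.
- apply (Hf (t0 + h)). split.
  + split; [exact I|]. intro Q. apply E. lra.
  + simpl. unfold R_dist. replace (t0 + h - t0) with h by ring. exact Hh.
Qed.

Lemma mul_le_of_le_div a b c : 0 < c -> a <= b / c -> a * c <= b.
Proof. intros Hc H. apply (Rmult_le_compat_r c) in H; [|lra].
unfold Rdiv in H. rewrite Rmult_assoc Rinv_l in H; lra. Qed.

Lemma n1_sum_bound n (F : vec n) (G : vec n) h :
  n1 (fun l => - h * F l - G l) <= Rabs h * n1 F + n1 G.
Proof.
unfold n1. rewrite -fsum_scal -fsum_plus. apply fsum_le => l.
eapply Rle_trans; [apply Rabs_triang|]. rewrite Rabs_Ropp Rabs_mult Rabs_Ropp. lra.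
Qed.

Theorem proposition4
  (p r s : nat)
  (v : Fin.t r -> vec p) (d : vec r) (w : Fin.t s -> vec p) (e : vec s)
  (f : vec p -> R) (grad : vec p -> vec p) (hess : vec p -> Fin.t p -> vec p)
  (Hconv : convex f)
  (HC2 : C2_with f grad hess)
  (I : R -> Prop)
  (HIopen : is_open_interval I)
  (HIpos : forall rho, I rho -> 0 < rho)
  (x : R -> vec p)
  (Hmin : forall rho, I rho -> unique_minimizer (Epen f v d w e rho) (x rho))
  (Hcont : forall rho, I rho -> forall l, continuity_pt (fun t => x t l) rho)
  (Hidx : forall rho1 rho2, I rho1 -> I rho2 ->
            same_index_sets v d w e (x rho1) (x rho2))
  (Hindep : forall rho, I rho -> UZ_rows_indep v d w e (x rho))
  (k : nat) (Y : Fin.t k -> vec p)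
  (HY : forall rho, I rho -> null_basis v d w e (x rho) Y)
  (Hnonsing : forall rho, I rho -> nonsingular (reduced_hess (hess (x rho)) Y)) :
  forall rho, I rho ->
    exists dx : vec p,
      (forall l, derivable_pt_lim (fun t => x t l) rho (dx l)) /\
      exists z : vec k,
        (forall c, mat_vec (reduced_hess (hess (x rho)) Y) z c
                   = mat_tr_vec Y (uZbar v d w e (x rho)) c) /\
        (forall l, dx l = - mat_col_comb Y z l).
Proof.
intros rho0 Hr0.
destruct HC2 as [Hgrad [Hhess _]].
set x0 := x rho0. set u := uZbar v d w e x0. set H := hess x0.
set M := reduced_hess H Y.
destruct (InvMx.mat_inv k M (Hnonsing rho0 Hr0)) as [N [HMN HNM]].
set b := mat_tr_vec Y u. set z := mat_vec N b. set wv : vec p := mat_col_comb Y z.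
exists (fun l => - wv l). split; [|exists z; split; [intros c; apply HMN | intros l; reflexivity]].
have Hkey : forall eta, 0 < eta -> exists δ, 0 < δ /\ forall h, Rabs h < δ ->
    forall l, Rabs (x (rho0 + h) l - x0 l + h * wv l) <= eta * Rabs h.
{ intros eta Heta.
  set K1 := fsum k (fun c => n1 (Y c)).
  set K2 := fsum k (fun c => n1 (N c)).
  set K3 := fsum p (fun l => n1 (fun c => Y c l)).
  have HK1 : 0 <= K1 by apply fsum_nonneg => c; apply n1_pos.
  have HK2 : 0 <= K2 by apply fsum_nonneg => c; apply n1_pos.
  have HK3 : 0 <= K3 by apply fsum_nonneg => c; apply n1_pos.
  have Hp0 := pos_INR p.
  set C := K3 * K2 * K1 * INR p.
  have HC : 0 <= C by unfold C; repeat apply Rmult_le_pos; lra.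
  set W := n1 wv. have HW : 0 <= W by apply n1_pos.
  set eps' := Rmin (/ (2 * (C + 1))) (eta / (2 * (C + 1) * (W + 1))).
  have Heps' : 0 < eps'.
  { apply Rmin_pos. apply Rinv_0_lt_compat; lra. apply Rdiv_lt_0_compat; [lra|].
    apply Rmult_lt_0_compat; lra. }
  have E1 : eps' * (2 * (C + 1)) <= 1.
  { apply mul_le_of_le_div; [lra|]. unfold Rdiv. rewrite Rmult_1_l. apply Rmin_l. }
  have E2 : eps' * (2 * (C + 1) * (W + 1)) <= eta.
  { apply mul_le_of_le_div; [apply Rmult_lt_0_compat; lra|]. apply Rmin_r. }
  destruct (fin_delta (vec p) vnorm p (fun i hv =>
      Rabs (grad (vadd x0 hv) i - grad x0 i - dot (H i) hv) <= eps' * vnorm hv))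
    as [dF [HdF HF]].
  { intros i. exact (Hhess x0 i eps' Heps'). }
  set e2 := dF / (INR p + 1).
  have He2 : 0 < e2 by apply Rdiv_lt_0_compat; lra.
  destruct (fin_delta R Rabs p (fun l hh => Rabs (x (rho0 + hh) l - x0 l) < e2))
    as [dc [Hdc Hc]].
  { intros l. exact (cont_delta (fun t => x t l) rho0 (Hcont rho0 Hr0 l) e2 He2). }
  destruct (proj2 HIopen rho0 Hr0) as [dI [HdI HI]].
  exists (Rmin dI dc). split; [apply Rmin_pos; lra|].
  intros h Hh.
  have HIr : I (rho0 + h).
  { apply HI. replace (rho0 + h - rho0) with h by ring. eapply Rlt_le_trans; [exact Hh|apply Rmin_l]. }
  have Hhc : Rabs h < dc by eapply Rlt_le_trans; [exact Hh|apply Rmin_r].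
  set xr := x (rho0 + h).
  set Dx := vsub xr x0.
  have HDx1 : n1 Dx < dF.
  { apply Rle_lt_trans with (INR p * e2).
    - rewrite -fsum_const. apply fsum_le => l. apply Rlt_le. exact (Hc h Hhc l).
    - have Ee : e2 * (INR p + 1) = dF by unfold e2; field; lra.
      nra. }
  have HDx : vnorm Dx < dF by eapply Rle_lt_trans; [apply vnorm_n1|exact HDx1].
  have Hxr : vadd x0 Dx = xr.
  { apply functional_extensionality => l. unfold vadd, Dx, vsub. ring. }
  set rr : vec p := fun i => grad xr i - grad x0 i - dot (H i) Dx.
  have Hrr : forall i, Rabs (rr i) <= eps' * vnorm Dx.
  { intros i. have := HF Dx HDx i. rewrite Hxr. auto. }
  have Hn1r : n1 rr <= INR p * (eps' * vnorm Dx).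
  { rewrite -fsum_const. apply fsum_le. exact Hrr. }
  have Hsame := Hidx rho0 (rho0 + h) Hr0 HIr.
  have Hu : uZbar v d w e xr = u by apply (uZbar_eq _ _ _ v d w e _ _ Hsame).
  have Hfoc : forall c, fsum p (fun i => Y c i * dot (H i) Dx) + fsum p (fun i => Y c i * rr i) = - h * b c.
  { intros c.
    have F1 := foc _ _ _ v d w e f grad Hgrad (rho0 + h) xr (proj1 (Hmin _ HIr)) (Y c)
                  (proj1 (HY _ HIr) c).
    have F0 := foc _ _ _ v d w e f grad Hgrad rho0 x0 (proj1 (Hmin _ Hr0)) (Y c)
                  (proj1 (HY _ Hr0) c).
    rewrite Hu in F1. fold u in F0.
    rewrite -fsum_plus.
    rewrite (fsum_ext' _ _ (fun i => grad xr i * Y c i - grad x0 i * Y c i)).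
    2:{ intros i. unfold rr. ring. }
    rewrite fsum_minus. unfold b, mat_tr_vec. rewrite (dot_comm _ (Y c) u).
    unfold dot in *. lra. }
  destruct (proj2 (proj2 (HY _ Hr0)) Dx (null_diff _ _ _ v d w e x0 xr Hsame)) as [a Ha].
  set Yr : vec k := fun c => fsum p (fun i => Y c i * rr i).
  have HMa : forall c, mat_vec M a c = - h * b c - Yr c.
  { intros c. unfold M. rewrite mat_vec_rh.
    have E : mat_col_comb Y a = Dx by apply functional_extensionality => l; rewrite Ha.
    rewrite E. unfold Yr. have := Hfoc c. lra. }
  have Ha2 : forall c, a c = - h * z c - mat_vec N Yr c.
  { intros c. rewrite -(HNM a c).
    rewrite (_ : mat_vec M a = fun c => - h * b c - Yr c); [|apply functional_extensionality; exact HMa].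
    unfold z, mat_vec. rewrite -fsum_scal -fsum_minus. apply fsum_ext' => c'. ring. }
  set et : vec p := mat_col_comb Y (mat_vec N Yr).
  have HDxe : forall l, Dx l = - h * wv l - et l.
  { intros l. rewrite Ha. unfold mat_col_comb, wv, et, mat_col_comb.
    rewrite -fsum_scal -fsum_minus. apply fsum_ext' => c. rewrite Ha2. ring. }
  have Het : n1 et <= C * eps' * n1 Dx.
  { have B3 : n1 et <= K3 * n1 (mat_vec N Yr).
    { unfold et, mat_col_comb.
      rewrite (_ : (fun l => fsum k (fun c => mat_vec N Yr c * Y c l)) =
                   (fun l => fsum k (fun c => Y c l * mat_vec N Yr c))).
      2:{ apply functional_extensionality => l. apply fsum_ext' => c. ring. }
      apply (opbound p k (fun l c => Y c l)). }
    have B2 : n1 (mat_vec N Yr) <= K2 * n1 Yr by apply opbound.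
    have B1 : n1 Yr <= K1 * n1 rr by apply opbound.
    have := vnorm_n1 _ Dx. have := n1_pos _ rr. have := n1_pos _ Yr. have := n1_pos _ (mat_vec N Yr).
    have := n1_pos _ Dx. have := Rlt_le _ _ Heps'. unfold C.
    intros. 
    apply Rle_trans with (K3 * (K2 * (K1 * (INR p * (eps' * vnorm Dx))))).
    { apply Rle_trans with (K3 * n1 (mat_vec N Yr)); [exact B3|].
      apply Rmult_le_compat_l; [lra|].
      apply Rle_trans with (K2 * n1 Yr); [exact B2|].
      apply Rmult_le_compat_l; [lra|].
      apply Rle_trans with (K1 * n1 rr); [exact B1|].
      apply Rmult_le_compat_l; [lra|]. exact Hn1r. }
    have : K3 * (K2 * (K1 * (INR p * (eps' * vnorm Dx)))) = (K3 * K2 * K1 * INR p * eps') * vnorm Dx by ring.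
    intros ->. apply Rmult_le_compat_l; [|assumption].
    repeat apply Rmult_le_pos; lra. }
  have HDxb : n1 Dx <= Rabs h * W + n1 et.
  { rewrite (_ : Dx = fun l => - h * wv l - et l); [apply n1_sum_bound|].
    apply functional_extensionality; exact HDxe. }
  have HCe : C * eps' <= / 2 by nra.
  have HDx2 : n1 Dx <= 2 * Rabs h * W.
  { have := n1_pos _ Dx. have := Rabs_pos h. nra. }
  intros l.
  have Hl : xr l - x0 l + h * wv l = - et l.
  { have := HDxe l. unfold Dx, vsub. lra. }
  fold xr. rewrite Hl Rabs_Ropp.
  eapply Rle_trans; [apply n1_coord|].
  eapply Rle_trans; [exact Het|].
  have := Rabs_pos h. have := n1_pos _ Dx. intros Hn Hah.
  have HCe0 : 0 <= C * eps' by apply Rmult_le_pos; lra.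
  apply Rle_trans with (C * eps' * (2 * Rabs h * W)).
  { apply Rmult_le_compat_l; assumption. }
  apply Rle_trans with (eps' * (2 * (C + 1) * (W + 1)) * Rabs h).
  { have : C * eps' * (2 * Rabs h * W) <= eps' * (2 * (C + 1) * (W + 1)) * Rabs h.
    { have : 0 <= eps' * Rabs h by apply Rmult_le_pos; lra.
      have : 0 <= eps' * Rabs h * W by apply Rmult_le_pos; [apply Rmult_le_pos|]; lra.
      have : 0 <= eps' * Rabs h * C by apply Rmult_le_pos; [apply Rmult_le_pos|]; lra.
      have : 0 <= eps' * Rabs h * C * W by apply Rmult_le_pos; [apply Rmult_le_pos; [apply Rmult_le_pos|]|]; lra.
      nra. }
    lra. }
  apply Rmult_le_compat_r; lra. }
intros l eps Heps.
destruct (Hkey (eps / 2)) as [δ [Hδ Hk]]; [lra|].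
exists (mkposreal δ Hδ). intros h Hh0 Hh. simpl in Hh.
have := Hk h Hh l. fold x0.
have Hha : 0 < Rabs h by apply Rabs_pos_lt.
intros Hb.
replace ((x (rho0 + h) l - x0 l) / h - - wv l) with ((x (rho0 + h) l - x0 l + h * wv l) / h)
  by (field; exact Hh0).
unfold Rdiv at 1. rewrite Rabs_mult Rabs_inv.
apply Rle_lt_trans with (eps / 2); [|lra].
apply (Rmult_le_reg_r (Rabs h)); [exact Hha|].
rewrite Rmult_assoc Rinv_l; lra.
Qed.
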